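(* Let $n\ge 3$ and let $\pi\in S_n$ be a shallow permutation avoiding $132$. If $\pi_j=n$ with $2\le j\le n-1$, then $\pi_n=1$. If $\pi_j=n$ with $2\le j\le n-2$, then $\pi_1=n-1$.
   Context: For $\pi\in S_n$: $D(\pi)=\sum_{i}|\pi_i-i|$, $I(\pi)$ is the number of inversions, $T(\pi)=n-\mathrm{cyc}(\pi)$ with $\mathrm{cyc}$ the number of cycles in the disjoint cycle decomposition; $\pi$ is shallow if $I(\pi)+T(\pi)=D(\pi)$. A permutation avoids a pattern $\sigma$ if it has no subsequence order-isomorphic to $\sigma$. *)

(* Defs.v *)
From mathcomp Require Import all_boot all_order all_fingroup.
Set Implicit Arguments. Unset Strict Implicit. Unset Printing Implicit Defensive.

(* Permutations of {1..n} are modelled as s : 'S_n acting on 'I_n = {0..n-1};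
   position i (1-based) corresponds to ordinal i-1 and value pi_i to (s (i-1)) + 1.
   All quantities below are invariant under this uniform shift. *)

Definition displacement n (s : 'S_n) : nat :=
  \sum_(i : 'I_n) (((s i : nat) - (i : nat)) + ((i : nat) - (s i : nat))).

Definition inversions n (s : 'S_n) : nat :=
  #|[set p : 'I_n * 'I_n | (p.1 < p.2) && (s p.2 < s p.1)]|.

Definition ncycles n (s : 'S_n) : nat := #|porbits s|.

Definition tdepth n (s : 'S_n) : nat := n - ncycles s.

Definition shallow n (s : 'S_n) : bool :=
  inversions s + tdepth s == displacement s.

Definition avoids132 n (s : 'S_n) : bool :=
  ~~ [exists i : 'I_n, exists j : 'I_n, exists k : 'I_n,
        [&& i < j, j < k, s i < s k & s k < s j]].

(* Main.v *)
Require Import Defs.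
From mathcomp Require Import all_boot all_order all_fingroup.
From mathcomp Require Import zify.
Set Implicit Arguments. Unset Strict Implicit. Unset Printing Implicit Defensive.

Lemma g_arith (y j p a m : nat) : j < p -> a != p -> a != m -> y != j -> y != p -> m < p ->
  ((j < y) && (y < p) -> a < p) ->
  ((y<j)&&(p<a)) + ((y<p)&&(m<a)) + ((j<y)&&(a<p)) + ((p<y)&&(a<m)) =
  ((y<j)&&(m<a)) + ((y<p)&&(p<a)) + ((j<y)&&(a<m)) + ((p<y)&&(a<p)) + 2 * ((j<y)&&(y<p)&&(m<a)).
Proof.
move=> h1 h2 h3 h4 h5 h6 h7.
case: (ltnP y j) => q1; case: (ltnP p a) => q2; case: (ltnP y p) => q3; case: (ltnP m a) => q4;
case: (ltnP j y) => q5; case: (ltnP a p) => q6; case: (ltnP p y) => q7; case: (ltnP a m) => q8 => /=; lia.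
Qed.

Lemma sum_range_gen (a b N : nat) : \sum_(k < N) ((a < k) && (k < b) : nat) = minn b N - a.+1.
Proof.
elim: N => [|N IH]; first by rewrite big_ord0 minn0.
rewrite big_ord_recr /= IH.
case: (ltnP a N) => h1; case: (ltnP N b) => h2 /=; lia.
Qed.

Section S.
Variable n : nat.
Implicit Types s : 'S_n.

Lemma invE s : inversions s =
  \sum_(x : 'I_n) \sum_(y : 'I_n) ((x < y) && (s y < s x) : nat).
Proof.
rewrite /inversions pair_big /= -sum1_card big_mkcond /=.
by apply: eq_bigr => q _; rewrite inE; case: (_ && _).
Qed.

Lemma split2 (F : 'I_n -> nat) (j p : 'I_n) : j != p ->
  \sum_x F x = F j + F p + \sum_(x | (x != j) && (x != p)) F x.
Proof.
move=> jp; rewrite (bigD1 j) //= (bigD1 p) 1?eq_sym //= addnA.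
by congr (_ + _); apply: eq_bigl => i; rewrite andbC.
Qed.

Lemma dsplit (G : 'I_n -> 'I_n -> nat) (j p : 'I_n) : j != p ->
  \sum_x \sum_y G x y = G j j + G p j + G j p + G p p
   + \sum_(y | (y != j) && (y != p)) (G y j + G y p + G j y + G p y)
   + \sum_(x | (x != j) && (x != p)) \sum_(y | (y != j) && (y != p)) G x y.
Proof.
move=> jp.
under eq_bigr => x _ do rewrite (split2 (G x) jp).
repeat (rewrite big_split /=).
rewrite  (split2 (fun x => G x j) jp) (split2 (fun x => G x p) jp).
rewrite (split2 (fun x => \sum_(y | (y != j) && (y != p)) G x y) jp) /=.
lia.
Qed.

Lemma sum_ge1 (F : 'I_n -> nat) k0 : 0 < F k0 -> 0 < \sum_k F k.
Proof. by move=> h; rewrite (bigD1 k0) //= ltn_addr. Qed.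


Lemma sum_range (a b : nat) : b <= n -> \sum_(k < n) ((a < k) && (k < b) : nat) = b - a.+1.
Proof. by move=> h; rewrite sum_range_gen; congr (_ - _); apply/minn_idPl. Qed.

Lemma boundpos (j p : nat) (P : 'I_n -> bool) : p <= n ->
  \sum_(k : 'I_n) ((j<k)&&(k<p)&&P k : nat) + \sum_(k : 'I_n) ((j<k)&&(k<p)&& ~~P k : nat) = p - j.+1.
Proof.
move=> h; rewrite -big_split /= -(sum_range j h); apply: eq_bigr => k _.
by case: (P k); rewrite ?andbT ?andbF ?addn0.
Qed.

Lemma boundval s (j p m : nat) : p <= n -> (forall k : 'I_n, (j < k) && (k < p) -> s k < p) ->
  \sum_(k : 'I_n) ((j<k)&&(k<p)&&(m < s k) : nat)
  + \sum_(k : 'I_n) (~~((j<k)&&(k<p)) && (m < s k) && (s k < p) : nat) <= p - m.+1.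
Proof.
move=> h hk; rewrite -big_split /=.
apply: (@leq_trans (\sum_(k : 'I_n) ((m < s k) && (s k < p) : nat))).
  apply: leq_sum => k _; case c: ((j<k)&&(k<p)) => /=.
    by rewrite (hk k c) andbT addn0.
  by rewrite add0n.
rewrite -(sum_range m h); apply: eq_leq; symmetry.
exact: (reindex_inj (@perm_inj _ s)).
Qed.

Lemma inv_rel (G H : 'I_n -> 'I_n -> nat) (K : 'I_n -> nat) (j p : 'I_n) c : j != p ->
 (forall x y, x != j -> x != p -> y != j -> y != p -> G x y = H x y) ->
 (forall y, y != j -> y != p ->
    G y j + G y p + G j y + G p y = H y j + H y p + H j y + H p y + 2 * K y) ->
 G j j + G p j + G j p + G p p = H j j + H p j + H j p + H p p + c ->
 \sum_x \sum_y G x y = \sum_x \sum_y H x y + c + 2 * \sum_(y | (y != j) && (y != p)) K y.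
Proof.
move=> jp h1 h2 h3; rewrite (dsplit _ jp) (dsplit H jp).
have -> : \sum_(x | (x != j) && (x != p)) \sum_(y | (y != j) && (y != p)) G x y =
          \sum_(x | (x != j) && (x != p)) \sum_(y | (y != j) && (y != p)) H x y.
  apply: eq_bigr => x /andP[a b]; apply: eq_bigr => y /andP[c' d]; exact: h1.
rewrite (eq_bigr (fun y => H y j + H y p + H j y + H p y + 2 * K y)); last first.
  by move=> y /andP[a b]; exact: h2.
rewrite big_split /= -big_distrr /=. lia.
Qed.

Definition absd (a b : nat) := (a - b) + (b - a).

Lemma step s (j p : 'I_n) : j < p -> s j = p ->
  (forall k : 'I_n, p < k -> s k = k) ->
  let u := (tperm j p * s)%g in
  let m := s p in
  let A := \sum_(k : 'I_n) ((j < k) && (k < p) && (m < s k) : nat) in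
  [/\ displacement s + absd m j = displacement u + (p - j) + (p - m),
      inversions s = inversions u + 1 + 2 * A,
      tdepth s = tdepth u + 1,
      A + 1 <= p - j & A + 1 <= p - m].
Proof.
move=> jp sj hfix u m A.
have jnp : j != p by rewrite neq_ltn jp.
have uE x : u x = s (tperm j p x) by rewrite permM.
have uj : u j = m by rewrite uE tpermL.
have up : u p = p by rewrite uE tpermR.
have uo x : x != j -> x != p -> u x = s x.
  by move=> h1 h2; rewrite uE tpermD // eq_sym.
have sle (k : 'I_n) : k <= p -> s k <= p.
  move=> hk; rewrite leqNgt; apply/negP => hs.
  have := hfix _ hs; move/perm_inj => e.
  by move: hs; rewrite e ltnNge hk.
have mp : m < p.
  rewrite ltn_neqAle sle // andbT; apply/eqP => e.
  by move/eqP: jnp; apply; apply: (@perm_inj _ s); rewrite sj; apply: val_inj; exact: (esym e).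
have hmid (k : 'I_n) : (j < k) && (k < p) -> s k < p.
  case/andP=> h1 h2; rewrite ltn_neqAle sle ?(ltnW h2) // andbT.
  apply/eqP => e; have : k = j by apply: (@perm_inj _ s); apply: val_inj; rewrite /= e sj.
  by move=> ek; move: h1; rewrite ek ltnn.
split.
- rewrite /displacement (split2 _ jnp) [in RHS](split2 _ jnp).
  rewrite /=.
  have -> : \sum_(x | (x != j) && (x != p)) (((u x : nat) - x) + (x - u x)) =
     \sum_(x | (x != j) && (x != p)) (((s x : nat) - x) + (x - s x)).
    by apply: eq_bigr => i /andP[h1 h2]; rewrite uo.
  rewrite uj up sj /absd -/m.
  move: (\sum_(x < n | _) _) => S. lia.
- rewrite !invE (@inv_rel (fun x y : 'I_n => ((x < y) && (s y < s x) : nat)) (fun x y : 'I_n => ((x < y) && (u y < u x) : nat)) (fun y : 'I_n => ((j < y) && (y < p) && (m < s y) : nat)) j p 1 jnp).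
  + by rewrite /A; congr (_ + 2 * _); rewrite [RHS](split2 _ jnp) /= ltnn /= ltnn andbF /=.
  + by move=> x y a b c' d; rewrite !uo.
  + move=> y a b; rewrite uj up (uo y a b) sj.
    apply: g_arith => //.
    all: try (by rewrite (inj_eq val_inj) (inj_eq perm_inj)). all: try (exact: hmid).
    apply/eqP => e; move/eqP: a; apply; apply: (@perm_inj _ s); apply: val_inj; by rewrite /= e sj.
  + by rewrite uj up sj !ltnn (ltnNge p j) (ltnW jp) jp /= -/m mp (ltnNge p m) (ltnW mp).
- have hin : j \in porbit s p.
    by rewrite porbit_sym; have := mem_porbit s 1 j; rewrite expg1 sj.
  have e1 : ncycles u = ncycles s + 1.
    have := porbits_mul_tperm s j p; rewrite jnp hin /=.
    by move=> h; exact: (etrans (esym (addn0 _)) h).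
  have e2 : ncycles u <= n.
    by rewrite /ncycles (leq_trans (leq_imset_card _ _)) ?card_ord.
  rewrite /tdepth; lia.
- have := boundpos j (fun k => m < s k) (ltnW (ltn_ord p)).
  rewrite /= -/A. lia.
- have := boundval m (ltnW (ltn_ord p)) hmid.
  rewrite -/A; lia.
Qed.

Lemma tdepth1 : tdepth (1 : 'S_n) = 0.
Proof.
have e x : porbit (1 : 'S_n) x = [set x].
  apply/setP => y; rewrite inE; apply/porbitP/eqP => [[i ->]|->].
    by rewrite expg1n perm1.
  by exists 0; rewrite expg0 perm1.
rewrite /tdepth /ncycles /porbits (eq_imset _ e) card_imset ?card_ord ?subnn //.
exact: set1_inj.
Qed.

Lemma inv1 : inversions (1 : 'S_n) = 0.
Proof.
rewrite invE big1 // => x _; rewrite big1 // => y _; rewrite !perm1.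
by case h: (x < y) => //=; rewrite ltnNge ltnW.
Qed.

Lemma disp1 : displacement (1 : 'S_n) = 0.
Proof. by rewrite /displacement big1 // => i _; rewrite perm1 subnn. Qed.

Lemma DG s : inversions s + tdepth s <= displacement s.
Proof.
suff H : forall k (s : 'S_n), (forall i : 'I_n, k <= i -> s i = i) ->
    inversions s + tdepth s <= displacement s.
  by apply: (H n) => i; rewrite leqNgt ltn_ord.
elim=> [|k IH] s0 hs.
  have -> : s0 = 1%g by apply/permP => i; rewrite perm1 hs.
  by rewrite inv1 tdepth1 disp1.
case: (ltnP k n) => kn; last first.
  by apply: IH => i hi; have := ltn_ord i; lia.
pose p := Ordinal kn.
case e: (s0 p == p).
  apply: IH => i; rewrite leq_eqVlt => /orP [/eqP ei | hi]; last exact: hs.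
  have -> : i = p by apply: val_inj; rewrite /= ei.
  exact/eqP.
pose j := (s0^-1 p)%g.
have sj : s0 j = p by rewrite permKV.
have jp : j < p.
  case: (ltngtP j p) => // h.
    by have := hs j h; rewrite sj => ej; move: h; rewrite -ej ltnn.
  by move/val_inj: h => h; move: e; rewrite -{1}h sj eqxx.
have hfix : forall k' : 'I_n, p < k' -> s0 k' = k' by move=> k'; exact: hs.
case: (step jp sj hfix) => D1 I1 T1 b1 b2.
set u := (tperm j p * s0)%g in D1 I1 T1 b1 b2 *.
have hu : inversions u + tdepth u <= displacement u.
  apply: IH => i hi; rewrite /u permM.
  case: (ltngtP i p) => h.
  - by move: h; rewrite ltnNge hi.
  - rewrite tpermD ?hs //.
      by rewrite neq_ltn (ltn_trans jp h).
    by rewrite neq_ltn h.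
  - have -> : i = p by apply: val_inj.
    by rewrite tpermR sj.
move: D1; rewrite /absd; lia.
Qed.

Lemma step_shallow s (j p : 'I_n) : j < p -> s j = p ->
  (forall k : 'I_n, p < k -> s k = k) ->
  inversions s + tdepth s = displacement s ->
  inversions (tperm j p * s)%g + tdepth (tperm j p * s)%g = displacement (tperm j p * s)%g.
Proof.
move=> jp sj hfix hs.
case: (step jp sj hfix) => D1 I1 T1 b1 b2.
have := DG (tperm j p * s)%g.
move: D1; rewrite /absd; lia.
Qed.

Lemma step_strict s (j p : 'I_n) : j < p -> s j = p ->
  (forall k : 'I_n, p < k -> s k = k) ->
  inversions s + tdepth s = displacement s ->
  (exists k0 : 'I_n, [/\ j < k0, k0 < p & s k0 < s p]) ->
  (exists i0 : 'I_n, [/\ ~~ ((j < i0) && (i0 < p)), s p < s i0 & s i0 < p]) -> False.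
Proof.
move=> jp sj hfix hs [k0 [h1 h2 h3]] [i0 [h4 h5 h6]].
case: (step jp sj hfix) => D1 I1 T1 b1 b2.
have := DG (tperm j p * s)%g.
have c1 := boundpos j (fun k => s p < s k) (ltnW (ltn_ord p)).
have hmid : forall k : 'I_n, (j < k) && (k < p) -> s k < p.
  move=> k /andP[a b]; rewrite ltn_neqAle.
  have -> : (s k : nat) <= p.
    rewrite leqNgt; apply/negP => hh.
    have := hfix _ hh; move/perm_inj => e.
    by move: hh; rewrite e ltnNge (ltnW b).
  rewrite andbT; apply/eqP => e.
  have : k = j by apply: (@perm_inj _ s); apply: val_inj; rewrite /= e sj.
  by move=> ek; move: a; rewrite ek ltnn.
have c2 := boundval (s p) (ltnW (ltn_ord p)) hmid.
have w1 : 0 < \sum_(k : 'I_n) ((j < k) && (k < p) && ~~ (s p < s k) : nat).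
  by apply: (@sum_ge1 _ k0); rewrite h1 h2 /= -leqNgt (ltnW h3).
have w2 : 0 < \sum_(k : 'I_n) (~~ ((j < k) && (k < p)) && (s p < s k) && (s k < p) : nat).
  by apply: (@sum_ge1 _ i0); rewrite h4 h5 h6.
move: D1 c1 c2 w1 w2; rewrite /absd /=.
set A := \sum_(k < n) ((j < k < p) && (s p < s k) : nat).
set C := \sum_(k < n) ((j < k < p) && ~~ (s p < s k) : nat).
set C' := \sum_(k < n) (~~ (j < k < p) && (s p < s k) && (s k < p) : nat).
set Iu := inversions _; set Tu := tdepth _; set Du := displacement _.
move: I1 T1; rewrite -/A -/Iu -/Tu.
lia.
Qed.

End S.

Lemma av132 n (s : 'S_n) : avoids132 s ->
  forall i j k : 'I_n, i < j -> j < k -> s i < s k -> s k < s j -> False.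
Proof.
move=> /negP h i j k a b c d; apply: h.
apply/existsP; exists i; apply/existsP; exists j; apply/existsP; exists k.
by rewrite a b c d.
Qed.

Theorem lemma3p2 (n : nat) (s : 'S_n) :
  3 <= n -> shallow s -> avoids132 s ->
  (forall j : 'I_n, (s j : nat) = n.-1 -> 1 <= (j : nat) <= n - 2 ->
     forall k : 'I_n, (k : nat) = n.-1 -> (s k : nat) = 0) /\
  (forall j : 'I_n, (s j : nat) = n.-1 -> 1 <= (j : nat) <= n - 3 ->
     forall k : 'I_n, (k : nat) = 0 -> (s k : nat) = n - 2).
Proof.
move=> n3 hsh hav.
have H132 := av132 hav.
have hs : inversions s + tdepth s = displacement s by apply/eqP.
have ne (a b : 'I_n) : (a : nat) != b -> (s a : nat) != s b.
  move=> h; apply: contra h => /eqP e; apply/eqP.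
  by rewrite (perm_inj (val_inj e)).
have eqo (a b : 'I_n) : (a : nat) = b -> a = b by move=> e; exact: val_inj.
have ubs (x : 'I_n) : (s x : nat) <= n.-1 by have := ltn_ord (s x); lia.
have ub (x : 'I_n) : (x : nat) <= n.-1 by have := ltn_ord x; lia.
have n0 : 0 < n by lia.
pose z := Ordinal n0.
have part1 : forall j : 'I_n, (s j : nat) = n.-1 -> 1 <= (j : nat) <= n - 2 ->
     forall k : 'I_n, (k : nat) = n.-1 -> (s k : nat) = 0.
  move=> j sj hj k hk.
  case: (posnP (s k)) => // hm; exfalso.
  pose k0 := (s^-1 z)%g.
  have sk0 : s k0 = z by rewrite permKV.
  have hjk : j < k by lia.
  have sjk : s j = k by apply: eqo; rewrite sj hk.
  apply: (step_strict hjk sjk _ hs).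
  - by move=> k' hk'; have := ub k'; lia.
  - exists k0.
    have k0k : (k0 : nat) != k by apply/eqP => e; rewrite -(eqo _ _ e) sk0 in hm.
    have k0j : (k0 : nat) != j by apply/eqP => e; rewrite -(eqo _ _ e) sk0 /= in sj; lia.
    have skj : (s k : nat) != s j by apply: ne; lia.
    have k0gt : j < k0.
      rewrite ltnNge leq_eqVlt negb_or k0j /=; apply/negP => hlt.
      apply: (H132 k0 j k hlt hjk); rewrite ?sk0 //; have := ubs k; lia.
    split => //; first by have := ub k0; lia.
    by rewrite sk0.
  - exists z; split.
    + by rewrite ltnNge leq0n.
    + have zk : (s z : nat) != s k by apply: ne; rewrite /=; lia.
      have zj : (s z : nat) != s j by apply: ne; rewrite /=; lia.
      rewrite ltnNge leq_eqVlt negb_or zk /=; apply/negP => hlt.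
      apply: (H132 z j k _ hjk hlt); first by rewrite /=; lia.
      have skj : (s k : nat) != s j by apply: ne; lia.
      have := ubs k; lia.
    + have zj : (s z : nat) != s j by apply: ne; rewrite /=; lia.
      have := ubs z; lia.
split => //.
move=> j sj hj k hk.
have neo (a b : 'I_n) : (a : nat) != b -> a != b by move=> h; apply: contra h => /eqP ->.
have pn : n.-1 < n by lia.
pose p := Ordinal pn.
have sp0 : (s p : nat) = 0 by apply: (part1 j sj) => //; lia.
have jp : j < p by rewrite /=; lia.
have sjp : s j = p by apply: eqo.
have hfixp : forall k' : 'I_n, p < k' -> s k' = k' by move=> k' h; have := ub k'; rewrite /= in h; lia.
have hu := step_shallow jp sjp hfixp hs.
set u := (tperm j p * s)%g in hu.
have uo x : x != j -> x != p -> u x = s x.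
  by move=> h1 h2; rewrite permM tpermD // eq_sym.
have uj : u j = s p by rewrite permM tpermL.
have up : u p = s j by rewrite permM tpermR.
have qn : n - 2 < n by lia.
pose q := Ordinal qn.
pose j' := (s^-1 q)%g.
have sj' : s j' = q by rewrite permKV.
rewrite (eqo k z hk).
case: (eqVneq (s z : nat) (n - 2)) => // hz; exfalso.
have j'j : (j' : nat) != j by apply/eqP => e; rewrite -(eqo _ _ e) sj' /= in sj; lia.
have j'p : (j' : nat) != p by apply/eqP => e; rewrite -(eqo _ _ e) sj' /= in sp0; lia.
have j'z : (j' : nat) != z by apply/eqP => e; rewrite -(eqo _ _ e) sj' /= in hz; lia.
have szj : (s z : nat) != s j by apply: ne; rewrite /=; lia.
have szlt : s z < n - 2 by have := ubs z; lia.
have j'lt : j' < j.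
  rewrite ltnNge leq_eqVlt negb_or eq_sym j'j /=; apply/negP => hlt.
  apply: (H132 z j j' _ hlt); first by rewrite /=; lia.
    by rewrite sj' /=.
  by rewrite sj' sj /=; lia.
have uj' : u j' = q by rewrite uo //; apply: neo.
have qj : (q : nat) != j by rewrite /=; lia.
have qp : (q : nat) != p by rewrite /=; lia.
have qz : (q : nat) != z by rewrite /=; lia.
have uq : u q = s q by rewrite uo //; apply: neo.
have uz : u z = s z by rewrite uo //; apply: neo; rewrite /=; lia.
have j'q : j' < q by rewrite /=; lia.
apply: (step_strict j'q uj' _ hu).
- move=> k' hk'; have := ub k'; rewrite /= in hk' => hk2.
  have -> : k' = p by apply: eqo; rewrite /=; lia.
  by apply: eqo; rewrite up sj.
- exists j; split => //; first by rewrite /=; lia.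
  rewrite uj uq; have := ne q p qp; rewrite sp0; lia.
- exists z; split.
  + by rewrite ltnNge leq0n.
  + rewrite uq uz.
    have qzs := ne q z qz.
    rewrite ltnNge leq_eqVlt negb_or eq_sym qzs /=; apply/negP => hlt.
    apply: (H132 z j q _ _ hlt); first by rewrite /=; lia.
      by rewrite /=; lia.
    have := ne q j qj; have := ubs q; lia.
  + by rewrite uz /=.
Qed.
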